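(* Let $X$ be a compact subset of $\mathbb{R}^n_\infty$. Then for every $X$-surrounding point $p$, the function $d_\infty^X(p,\cdot)=d_\infty(p,\cdot)|_X$ is minimal, i.e. $\iota_X(\mathcal{F}(X))\subseteq\mathbf{E}(X)$, where $\iota_X(z)=d_\infty^X(z,\cdot)$. In addition, the map $\iota_X:\mathcal{F}(X)\to\mathbf{E}(X)$ preserves distances; thus $\mathcal{F}(X)$ isometrically embeds into $\mathbf{E}(X)$.
   Context: $\mathbb{R}^n_\infty$ is $\mathbb{R}^n$ with the $\ell^\infty$-metric $d_\infty$. For $1\le i\le n$, $\Lambda_i=\{x:x_i=\|x\|_\infty\}$ and $p+\xi\Lambda_i=\{p+\xi z:z\in\Lambda_i\}$ for $\xi\in\{\pm1\}$. A point $p$ is $X$-surrounding if $(p+\xi\Lambda_i)\cap X\ne\emptyset$ for all $i$ and $\xi$; $\mathcal{F}(X)$ is the set of such points with metric $d_\infty$. $\Delta(X)=\{f:X\to\mathbb{R}\text{ bounded}:f(x)+f(x')\ge d_\infty(x,x')\}$, a function in $\Delta(X)$ is minimal if no other element of $\Delta(X)$ lies pointwise below it, and the tight span $\mathbf{E}(X)$ is the set of minimal elements with the sup-norm metric. *)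

(* Defs.v *)
(* Points of R^n are row vectors 'rV[R]_n; the
   library norm on matrices is the max-of-absolute-values (sup) norm, so
   `|x - y| is exactly the l^infty distance d_infty. *)
From HB Require Import structures.
From mathcomp Require Import all_boot all_order all_algebra.
From mathcomp Require Import all_classical all_reals all_analysis.
Set Implicit Arguments. Unset Strict Implicit. Unset Printing Implicit Defensive.
Import Order.TTheory GRing.Theory Num.Theory.
Import numFieldNormedType.Exports.
Local Open Scope classical_set_scope.
Local Open Scope ring_scope.

Definition dinf {R : realType} {n : nat} (x y : 'rV[R]_n) : R := `|x - y|.

Definition Lambda {R : realType} {n : nat} (i : 'I_n) : set 'rV[R]_n :=
  [set x : 'rV[R]_n | x ord0 i = `|x|].

Definition surrounding {R : realType} {n : nat} (X : set 'rV[R]_n) (p : 'rV[R]_n) : Prop :=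
  forall (i : 'I_n) (xi : R), (xi = 1 \/ xi = -1) ->
    exists z, Lambda i z /\ X (p + xi *: z).

Definition surrounding_set {R : realType} {n : nat} (X : set 'rV[R]_n) : set 'rV[R]_n :=
  [set p | surrounding X p].

(* Delta(X): functions X -> R (represented as functions on R^n, only their
   values on X matter) that are bounded on X and satisfy
   f x + f x' >= d_infty(x, x') for x, x' in X. *)
Definition Delta {R : realType} {n : nat} (X : set 'rV[R]_n) : set ('rV[R]_n -> R) :=
  [set f | (exists M : R, forall x, X x -> `|f x| <= M) /\
           (forall x x', X x -> X x' -> dinf x x' <= f x + f x')].

Definition minimal {R : realType} {n : nat} (X : set 'rV[R]_n) (f : 'rV[R]_n -> R) : Prop :=
  Delta X f /\
  forall g, Delta X g -> (forall x, X x -> g x <= f x) -> forall x, X x -> g x = f x.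

Definition tight_span {R : realType} {n : nat} (X : set 'rV[R]_n) : set ('rV[R]_n -> R) :=
  [set f | minimal X f].

Definition sup_dist {R : realType} {n : nat} (X : set 'rV[R]_n) (f g : 'rV[R]_n -> R) : R :=
  sup [set `|f x - g x| | x in X].

Definition iota_X {R : realType} {n : nat} (z : 'rV[R]_n) : 'rV[R]_n -> R :=
  fun x => dinf z x.

(* Main.v *)
Require Import Defs.
From mathcomp Require Import all_boot all_order all_algebra.
From mathcomp Require Import all_classical all_reals all_analysis.
From mathcomp Require Import ring lra.
Import Order.TTheory GRing.Theory Num.Theory.
Import numFieldNormedType.Exports.
Local Open Scope classical_set_scope.
Local Open Scope ring_scope.

Lemma coord_le (R : realType) (n : nat) (v : 'rV[R]_n) i : `|v ord0 i| <= `|v|.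
Proof.
have /mapP[j Hj ->] : `|v ord0 i| \in [seq `|v x.1 x.2| | x : 'I_1 * 'I_n].
  by apply/mapP; exists (ord0, i) => //=; rewrite mem_enum.
by rewrite [leRHS]/Num.Def.normr /= mx_normrE; apply/bigmax_geP; right => /=; exists j.
Qed.

Lemma coord_ex (R : realType) (n : nat) (v : 'rV[R]_n) :
  `|v| != 0 -> exists i, `|v| = `|v ord0 i|.
Proof.
move=> h; have [[a b] hab] := @mx_norm_neq0 R 1 n v h.
by exists b; move: hab; rewrite /= (ord1 a) => <-.
Qed.

Lemma sign_ex (R : realType) (y : R) : exists s, (s = 1 \/ s = -1) /\ y = s * `|y|.
Proof.
have [y0|y0] := lerP 0 y.
  by exists 1; split; [left|rewrite mul1r ger0_norm].
by exists (-1); split; [right|rewrite ltr0_norm // mulN1r opprK].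
Qed.

Lemma opp_far (R : realType) (n : nat) (p a z : 'rV[R]_n) i (s : R) :
  s = 1 \/ s = -1 -> (a - p) ord0 i = s * `|a - p| -> z ord0 i = `|z| ->
  `|a - p| + `|z| <= `|a - (p - s *: z)|.
Proof.
move=> hs ha hz.
have -> : `|a - p| + `|z| = `|(a - (p - s *: z)) ord0 i|.
  have -> : (a - (p - s *: z)) ord0 i = (a - p) ord0 i + s * z ord0 i.
    by rewrite !mxE; ring.
  rewrite ha hz -mulrDr normrM.
  have -> : `|s| = 1 by case: hs => ->; rewrite ?normrN normr1.
  by rewrite mul1r ger0_norm // addr_ge0.
exact: (@coord_le R n).
Qed.

Lemma far_point (R : realType) (n : nat) (X : set 'rV[R]_n) (p a : 'rV[R]_n) :
  surrounding X p -> `|a - p| != 0 ->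
  exists y, X y /\ `|a - p| + `|p - y| <= `|a - y|.
Proof.
move=> hp h; have [i hi] := @coord_ex R n (a - p) h.
have [s [hs hse]] := @sign_ex R ((a - p) ord0 i).
have hs' : -s = 1 \/ -s = -1 by case: hs => ->; [right|left; rewrite opprK].
have [z [hz hX]] := hp i (-s) hs'.
exists (p - s *: z); split; first by rewrite -scaleNr.
have -> : `|p - (p - s *: z)| = `|z|.
  rewrite opprB addrCA subrr addr0 normrZ.
  have -> : `|s| = 1 by case: hs => ->; rewrite ?normrN normr1.
  by rewrite mul1r.
apply: (@opp_far R n p a z i s) => //; first by rewrite hi.
Qed.

Theorem proposition5p4 (R : realType) (n : nat) (X : set 'rV[R]_n) :
  compact X ->
  (forall p, surrounding_set X p -> tight_span X (iota_X p)) /\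
  (forall p q, surrounding_set X p -> surrounding_set X q ->
     sup_dist X (iota_X p) (iota_X q) = dinf p q).
Proof.
move=> cX; split.
- move=> p hp; rewrite /tight_span /minimal /=; split.
  + split.
      have := compact_bounded cX; move=> /pinfty_ex_gt0 [M _ hM].
      exists (`|p| + M) => x Xx; rewrite /iota_X /dinf normr_id.
      apply: le_trans (ler_normB _ _) _; rewrite lerD2l; exact: hM.
    move=> x x' _ _; rewrite /iota_X /dinf.
    by rewrite (distrC p x); apply: le_trans (ler_distD p _ _).
  + move=> g [_ hg] hle x Xx; apply/eqP; rewrite eq_le hle //=.
    rewrite /iota_X /dinf distrC.
    have [h0|h0] := eqVneq `|x - p| 0.
      rewrite h0; have := hg x x Xx Xx; rewrite /dinf subrr normr0.
      by rewrite -mulr2n pmulrn_lge0.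
    have [y [Xy hy]] := @far_point R n X _ _ hp h0.
    have h1 := hg x y Xx Xy; have h2 := hle y Xy.
    rewrite /iota_X /dinf in h2; rewrite /dinf in h1.
    by have := le_trans hy h1; lra.
- move=> p q hp hq; rewrite /sup_dist.
  have E : forall x, iota_X p x - iota_X q x = `|p - x| - `|q - x| by [].
  have ub : ubound [set `|iota_X p x - iota_X q x| | x in X] (dinf p q).
    move=> _ [x _ <-]; rewrite E; apply: le_trans (ler_dist_dist _ _) _.
    by rewrite opprB addrA subrK.
  have [h0|h0] := eqVneq `|q - p| 0.
    rewrite /dinf distrC h0.
    have [->|/set0P [x Xx]] := eqVneq X set0.
      by rewrite image_set0 sup0.
    apply/eqP; rewrite eq_le; apply/andP; split.
      apply: ge_sup; first by exists (`|iota_X p x - iota_X q x|); exists x.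
      by rewrite -h0 distrC.
    apply: le_trans (normr_ge0 (iota_X p x - iota_X q x)) _.
    by apply: ub_le_sup; [exists (dinf p q)|exists x].
  have [y [Xy hy]] := @far_point R n X _ _ hp h0.
  apply/eqP; rewrite eq_le; apply/andP; split.
    by apply: ge_sup; [exists (`|iota_X p y - iota_X q y|); exists y|].
  apply: le_trans (ub_le_sup _ _); [|by exists (dinf p q) | by exists y].
  rewrite E /dinf.
  rewrite distrC (distrC q y) in hy; rewrite distrC (distrC q y) ler_normr; apply/orP; right.
  rewrite (distrC q p).
  by lra.
Qed.
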